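(* Let $S$ be a countable discrete inverse semigroup with identity and $\alpha\colon S\to\mathcal I(X)$ a representation. The following are equivalent: (1) $X$ is $S$-domain measurable; (2) $X$ is not $S$-paradoxical; (3) $X$ is $S$-domain F\o lner.
   Context: Inverse semigroup: each $s$ has a unique $s^*$ with $ss^*s=s$, $s^*ss^*=s^*$. A representation is a unital homomorphism $\alpha\colon S\to\mathcal I(X)$ into the inverse semigroup of partial bijections of $X$; $D_{s^*s}$ denotes the domain of $\alpha_s$, and $\alpha_s\colon D_{s^*s}\to D_{ss^*}$ is a bijection. Measures are finitely additive maps $\mathcal P(X)\to[0,\infty]$. For $A\subseteq X$: $A$ is $S$-domain measurable if some measure $\mu$ has $\mu(A)=1$ and $\mu(B)=\mu(\alpha_s(B))$ for all $s\in S$, $B\subseteq D_{s^*s}$; $A$ is $S$-domain F\o lner if there are finite non-empty $F_n\subseteq A$ with $|\alpha_s(F_n\cap D_{s^*s})\setminus F_n|/|F_n|\to0$ for all $s$; $A$ is $S$-paradoxical if there are $A_i,B_j\subseteq X$, $s_i,t_j\in S$ ($i\le n$, $j\le m$) with $A_i\subseteq D_{s_i^*s_i}$, $B_j\subseteq D_{t_j^*t_j}$ and $A=\bigsqcup_i\alpha_{s_i}(A_i)=\bigsqcup_j\alpha_{t_j}(B_j)\supseteq A_1\sqcup\dots\sqcup A_n\sqcup B_1\sqcup\dots\sqcup B_m$. *)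

(* Defs.v *)
From Stdlib Require Import Reals List Classical.
Open Scope R_scope.

Definition IsInverseSemigroup {S : Type} (mul : S -> S -> S) : Prop :=
  (forall a b c, mul (mul a b) c = mul a (mul b c)) /\
  (forall s, exists! t, mul (mul s t) s = s /\ mul (mul t s) t = t).

Definition IsIdentity {S : Type} (mul : S -> S -> S) (e : S) : Prop :=
  forall s, mul e s = s /\ mul s e = s.

Definition Countable (S : Type) : Prop :=
  exists f : nat -> S, forall s, exists n, f n = s.

(* A partial bijection of X is encoded as X -> option X (None = undefined),
   required to be injective on its domain. *)
Definition PartialBijection {X : Type} (f : X -> option X) : Prop :=
  forall x x' y, f x = Some y -> f x' = Some y -> x = x'.

Definition pcomp {X : Type} (f g : X -> option X) : X -> option X :=
  fun x => match g x with Some y => f y | None => None end.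

Definition IsRepresentation {S X : Type} (mul : S -> S -> S) (e : S)
  (alpha : S -> X -> option X) : Prop :=
  (forall s, PartialBijection (alpha s)) /\
  (forall s t x, alpha (mul s t) x = pcomp (alpha s) (alpha t) x) /\
  (forall x, alpha e x = Some x).

Definition Dom {S X : Type} (alpha : S -> X -> option X) (s : S) : X -> Prop :=
  fun x => exists y, alpha s x = Some y.

Definition Img {S X : Type} (alpha : S -> X -> option X) (s : S) (B : X -> Prop)
  : X -> Prop :=
  fun y => exists x, B x /\ alpha s x = Some y.

Definition Subset {X : Type} (A B : X -> Prop) : Prop := forall x, A x -> B x.
Definition Disjoint {X : Type} (A B : X -> Prop) : Prop := forall x, ~ (A x /\ B x).

Inductive ereal : Type := Fin (r : R) | PInf.

Definition eadd (a b : ereal) : ereal :=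
  match a, b with Fin x, Fin y => Fin (x + y) | _, _ => PInf end.

Definition IsMeasure {X : Type} (mu : (X -> Prop) -> ereal) : Prop :=
  (forall A, match mu A with Fin r => 0 <= r | PInf => True end) /\
  mu (fun _ => False) = Fin 0 /\
  (forall A B, Disjoint A B -> mu (fun x => A x \/ B x) = eadd (mu A) (mu B)).

Definition DomainMeasurable {S X : Type} (alpha : S -> X -> option X)
  (A : X -> Prop) : Prop :=
  exists mu : (X -> Prop) -> ereal,
    IsMeasure mu /\ mu A = Fin 1 /\
    (forall s B, Subset B (Dom alpha s) -> mu B = mu (Img alpha s B)).

Definition HasCard {X : Type} (P : X -> Prop) (k : nat) : Prop :=
  exists l : list X, NoDup l /\ (forall x, In x l <-> P x) /\ length l = k.

Definition DomainFolner {S X : Type} (alpha : S -> X -> option X)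
  (A : X -> Prop) : Prop :=
  exists F : nat -> list X,
    (forall n, NoDup (F n) /\ F n <> nil /\ (forall x, In x (F n) -> A x)) /\
    (forall s (eps : R), 0 < eps -> exists N : nat, forall n : nat, (N <= n)%nat ->
       exists k : nat,
         HasCard (fun y => Img alpha s (fun x => In x (F n) /\ Dom alpha s x) y
                           /\ ~ In y (F n)) k /\
         INR k / INR (length (F n)) < eps).

Definition Paradoxical {S X : Type} (alpha : S -> X -> option X)
  (A : X -> Prop) : Prop :=
  exists (n m : nat) (As Bs : nat -> X -> Prop) (s t : nat -> S),
    (forall i, (i < n)%nat -> Subset (As i) (Dom alpha (s i))) /\
    (forall j, (j < m)%nat -> Subset (Bs j) (Dom alpha (t j))) /\
    (forall y, A y <-> exists i, (i < n)%nat /\ Img alpha (s i) (As i) y) /\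
    (forall i i', (i < n)%nat -> (i' < n)%nat -> i <> i' ->
       Disjoint (Img alpha (s i) (As i)) (Img alpha (s i') (As i'))) /\
    (forall y, A y <-> exists j, (j < m)%nat /\ Img alpha (t j) (Bs j) y) /\
    (forall j j', (j < m)%nat -> (j' < m)%nat -> j <> j' ->
       Disjoint (Img alpha (t j) (Bs j)) (Img alpha (t j') (Bs j'))) /\
    (forall i x, (i < n)%nat -> As i x -> A x) /\
    (forall j x, (j < m)%nat -> Bs j x -> A x) /\
    (forall i i', (i < n)%nat -> (i' < n)%nat -> i <> i' -> Disjoint (As i) (As i')) /\
    (forall j j', (j < m)%nat -> (j' < m)%nat -> j <> j' -> Disjoint (Bs j) (Bs j')) /\
    (forall i j, (i < n)%nat -> (j < m)%nat -> Disjoint (As i) (Bs j)).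

(* Main.v *)
Require Import Defs.
From Stdlib Require Import Reals List Classical.
From Stdlib Require Import ClassicalEpsilon Lia Lra Psatz Arith.
From Stdlib Require Import PropExtensionality FunctionalExtensionality.
From mathcomp Require ssreflect ssrbool classical_sets filter boolp.


Module UltraBridge.
Import ssreflect ssrbool classical_sets filter.
Lemma ultra_exists (T : Type) (P : (T -> Prop) -> Prop) :
  P (fun _ => True) ->
  (forall A B, P A -> P B -> P (fun x => A x /\ B x)) ->
  (forall A B, (forall x, A x -> B x) -> P A -> P B) ->
  ~ P (fun _ => False) ->
  exists U : (T -> Prop) -> Prop,
    (forall A, P A -> U A) /\
    (forall A B, U A -> U B -> U (fun x => A x /\ B x)) /\
    (forall A B, (forall x, A x -> B x) -> U A -> U B) /\
    ~ U (fun _ => False) /\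
    (forall A, U A \/ U (fun x => ~ A x)).
Proof.
move=> PT PI PS P0.
have PF : ProperFilter P.
  split; first exact: P0.
  split; [exact: PT| move=> A B; exact: PI| move=> A B; exact: PS].
have [G [GU sPG]] := ultraFilterLemma PF.
have GF : ProperFilter G := @ultra_proper _ _ GU.
exists G; split; first exact: sPG.
split; first by move=> A B; apply: filterI.
split; first by move=> A B; apply: filterS.
split; first exact: (filter_not_empty G).
move=> A.
case: (boolp.pselect (G (fun x => ~ A x))) => [|nGA]; first by right.
left.
pose H := fun B : T -> Prop => exists C, G C /\ forall x, C x -> A x -> B x.
have HF : ProperFilter H.
  split.
    move=> [C [GC HC]]; apply: nGA; apply: filterS GC.
    by move=> x Cx Ax; apply: (HC x Cx Ax).
  split.
  - by exists setT; split; [apply: filterT|].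
  - move=> B1 B2 [C1 [G1 H1]] [C2 [G2 H2]].
    exists (fun x => C1 x /\ C2 x); split; first by apply: filterI.
    by move=> x [c1 c2] ax; split; [apply: H1|apply: H2].
  - move=> B1 B2 s [C [GC HC]]; exists C; split => // x cx ax.
    by apply: s; apply: HC.
have sGH : (forall B, G B -> H B) by move=> B GB; exists B; split.
have := @max_filter _ _ GU H HF sGH => HG.
have : H A by exists setT; split; [apply: filterT|].
by rewrite HG.
Qed.
End UltraBridge.


Import ListNotations.
Import ListNotations.

Definition dec (P : Prop) : {P} + {~ P} := excluded_middle_informative P.

Section Card.
Context {T : Type}.

Lemma HasCard_ext (P Q : T -> Prop) k :
  (forall x, P x <-> Q x) -> HasCard P k -> HasCard Q k.
Proof.
  intros H [l [Hn [Hi Hl]]]. exists l; repeat split; auto.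
  - intros Hx. apply H, Hi, Hx.
  - intros Hx. apply Hi, H, Hx.
Qed.

Lemma HasCard_list (l : list T) : NoDup l -> HasCard (fun x => In x l) (length l).
Proof. intros H. exists l; repeat split; auto. Qed.

Definition filt (P : T -> Prop) (l : list T) : list T :=
  filter (fun x => if dec (P x) then true else false) l.

Lemma In_filt P l x : In x (filt P l) <-> In x l /\ P x.
Proof.
  unfold filt. rewrite filter_In. destruct (dec (P x)); split; intros [? ?]; auto.
  all: try discriminate; try contradiction.
Qed.

Lemma nodup_dec : forall x y : T, {x = y} + {x <> y}.
Proof. intros x y. apply dec. Qed.

Lemma fin_card (P : T -> Prop) (l : list T) :
  (forall x, P x -> In x l) -> exists k, HasCard P k.
Proof.
  intros H. exists (length (filt P (nodup nodup_dec l))).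
  exists (filt P (nodup nodup_dec l)). repeat split.
  - unfold filt. apply NoDup_filter, NoDup_nodup.
  - intros Hx. apply In_filt in Hx. tauto.
  - intros Hx. apply In_filt. split; auto. apply nodup_In. auto.
Qed.

Lemma card_le (P Q : T -> Prop) a b :
  (forall x, P x -> Q x) -> HasCard P a -> HasCard Q b -> (a <= b)%nat.
Proof.
  intros H [l [Hn [Hi Hl]]] [l' [Hn' [Hi' Hl']]]. subst.
  apply NoDup_incl_length; auto. intros x Hx. apply Hi', H, Hi, Hx.
Qed.

Lemma card_unique (P : T -> Prop) a b : HasCard P a -> HasCard P b -> a = b.
Proof.
  intros H1 H2. apply Nat.le_antisymm; eapply card_le; eauto.
Qed.

Lemma card_disj (P Q : T -> Prop) a b :
  Disjoint P Q -> HasCard P a -> HasCard Q b -> HasCard (fun x => P x \/ Q x) (a + b).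
Proof.
  intros D [l [Hn [Hi Hl]]] [l' [Hn' [Hi' Hl']]]. subst.
  exists (l ++ l'). repeat split.
  - apply NoDup_app; auto. intros x H1 H2. apply (D x). split; [apply Hi|apply Hi']; auto.
  - intros H. apply in_app_or in H. destruct H; [left; apply Hi|right; apply Hi']; auto.
  - intros [H|H]; apply in_or_app; [left; apply Hi|right; apply Hi']; auto.
  - apply length_app.
Qed.

Lemma card_fin_of (P : T -> Prop) k : HasCard P k -> exists l, forall x, P x -> In x l.
Proof. intros [l [_ [Hi _]]]. exists l. intros. apply Hi; auto. Qed.

Lemma card_union_le (P Q : T -> Prop) a b c :
  HasCard P a -> HasCard Q b -> HasCard (fun x => P x \/ Q x) c -> (c <= a + b)%nat.
Proof.
  intros HP HQ HU.
  destruct (card_fin_of _ _ HQ) as [l Hl].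
  destruct (fin_card (fun x => Q x /\ ~ P x) l) as [b' Hb']. { intros x [? ?]; auto. }
  assert (b' <= b)%nat by (eapply card_le; [|exact Hb'|exact HQ]; intros x [? ?]; auto).
  assert (HasCard (fun x => P x \/ (Q x /\ ~ P x)) (a + b')) as H2.
  { apply card_disj; auto. intros x [? [? ?]]; auto. }
  assert (c = a + b')%nat. { eapply card_unique. exact HU. eapply HasCard_ext; [|exact H2].
    intros x; split; [intros [?|[? ?]]; auto| intros [?|?]; auto]. destruct (classic (P x)); auto. }
  lia.
Qed.

Lemma card_single (b : T) : HasCard (fun y => y = b) 1.
Proof. exists [b]. repeat split. constructor; auto; constructor. intros [H|[]]; auto. intros ->; left; auto. Qed.

Lemma card_remove (Q : T -> Prop) b c c' :
  HasCard Q c -> HasCard (fun y => Q y /\ y <> b) c' -> (c <= c' + 1)%nat.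
Proof.
  intros H1 H2.
  destruct (card_fin_of _ _ H1) as [l Hl].
  destruct (fin_card (fun y => (Q y /\ y <> b) \/ y = b) (b :: l)) as [d Hd].
  { intros y [[? ?]|Hy]; simpl; auto. }
  assert (c <= d)%nat. { eapply card_le; [|exact H1|exact Hd]. intros y Hy. destruct (classic (y = b)); auto. }
  assert (d <= c' + 1)%nat by (eapply card_union_le; [exact H2|apply card_single|exact Hd]).
  lia.
Qed.

Lemma card0 (P : T -> Prop) x : HasCard P 0 -> P x -> False.
Proof. intros [l [_ [Hi Hl]]] Hx. destruct l; [|discriminate]. apply Hi in Hx. destruct Hx. Qed.

Lemma card_pos (P : T -> Prop) k : HasCard P k -> (0 < k)%nat -> exists x, P x.
Proof. intros [l [_ [Hi Hl]]] Hk. destruct l as [|x l]. simpl in Hl; lia. exists x. apply Hi. left; auto. Qed.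

Lemma card_exists_of_list (P : T -> Prop) k : HasCard P k ->
  exists l, NoDup l /\ (forall x, In x l <-> P x) /\ length l = k.
Proof. auto. Qed.

End Card.

Lemma card_img {T U : Type} (f : T -> option U) (P : T -> Prop) a :
  (forall x x' y, f x = Some y -> f x' = Some y -> x = x') ->
  (forall x, P x -> exists y, f x = Some y) -> HasCard P a ->
  HasCard (fun y => exists x, P x /\ f x = Some y) a.
Proof.
  intros Hinj Hd [l [Hn [Hi Hl]]]. subst.
  pose (g := fun x => match f x with Some y => [y] | None => [] end).
  assert (forall l', (forall x, In x l' -> P x) -> NoDup l' ->
     NoDup (flat_map g l') /\ length (flat_map g l') = length l' /\
     (forall y, In y (flat_map g l') <-> exists x, In x l' /\ f x = Some y)) as Hgen.
  { induction l' as [|x l' IH]; intros HP Hnd.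
    - simpl. repeat split; auto. constructor. intros []. intros [x [[] _]].
    - inversion Hnd; subst. destruct IH as [IH1 [IH2 IH3]]; auto. { intros; apply HP; right; auto. }
      destruct (Hd x) as [y Hy]. apply HP; left; auto.
      assert (g x = [y]) as Hgx by (unfold g; rewrite Hy; auto).
      simpl. rewrite Hgx. simpl. repeat split.
      + constructor; auto. intros Hin. apply IH3 in Hin. destruct Hin as [x' [Hx' Hfx']].
        assert (x = x') by (eapply Hinj; eauto). subst. contradiction.
      + f_equal. exact IH2.
      + intros [H|H]. subst. exists x; auto. apply IH3 in H. destruct H as [x' [? ?]]. exists x'; auto.
      + intros [x' [[H|H] Hf]]. subst. rewrite Hy in Hf. inversion Hf; auto.
        right. apply IH3. eauto. }
  destruct (Hgen l) as [G1 [G2 G3]]; auto. { intros; apply Hi; auto. }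
  exists (flat_map g l). repeat split; auto.
  - intros H. apply G3 in H. destruct H as [x0 [? ?]]. exists x0. split; auto. apply Hi; auto.
  - intros [x0 [? ?]]. apply G3. exists x0; split; auto. apply Hi; auto.
Qed.

Import ListNotations.

Definition NBl {A B : Type} (R : A -> B -> Prop) (P : list A) : B -> Prop :=
  fun b => exists a, In a P /\ R a b.

Lemma NBl_fin {A B : Type} (R : A -> B -> Prop) (P : list A) :
  (forall a, In a P -> exists lb, forall b, R a b -> In b lb) ->
  exists c, HasCard (NBl R P) c.
Proof.
  intros H.
  assert (exists l, forall b, NBl R P b -> In b l) as [l Hl].
  { induction P as [|a P IH].
    - exists []. intros b [a [[] _]].
    - destruct IH as [l Hl]. { intros; apply H; right; auto. }
      destruct (H a) as [lb Hlb]. left; auto.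
      exists (lb ++ l). intros b [a' [[->|Ha'] Hr]]; apply in_or_app.
      + left; auto.
      + right. apply Hl. exists a'; auto. }
  eapply fin_card; eauto.
Qed.

Lemma filt_len {A : Type} (P0 L : list A) :
  NoDup P0 -> NoDup L -> incl P0 L ->
  (length (filt (fun a => ~ In a P0) L) + length P0 <= length L)%nat.
Proof.
  intros H0 HL Hi. rewrite <- length_app. apply NoDup_incl_length.
  - apply NoDup_app; auto. unfold filt. apply NoDup_filter; auto.
    intros x H1 H2. apply In_filt in H1. tauto.
  - intros x Hx. apply in_app_or in Hx. destruct Hx as [Hx|Hx].
    apply In_filt in Hx; tauto. apply Hi; auto.
Qed.

Theorem hall {A B : Type} (d : A -> B) : forall n (R : A -> B -> Prop) (L : list A),
  (length L <= n)%nat -> NoDup L ->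
  (forall a, In a L -> exists lb, forall b, R a b -> In b lb) ->
  (forall P, NoDup P -> incl P L -> forall c, HasCard (NBl R P) c -> (length P <= c)%nat) ->
  exists g : A -> B, (forall a, In a L -> R a (g a)) /\
     (forall a a', In a L -> In a' L -> g a = g a' -> a = a').
Proof.
  induction n as [|n IH]; intros R L Hlen Hnd Hfin Hh.
  { destruct L; [|simpl in Hlen; lia]. exists d. split; [intros a []|intros a a' []]. }
  destruct (classic (exists P0, NoDup P0 /\ incl P0 L /\ P0 <> [] /\
        (length P0 < length L)%nat /\ HasCard (NBl R P0) (length P0))) as [Ht|Hnt].
  - destruct Ht as [P0 [HP0n [HP0i [HP0ne [HP0l HP0c]]]]].
    destruct (IH R P0 ltac:(lia) HP0n ltac:(intros a Ha; apply Hfin, HP0i, Ha)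
      ltac:(intros P HPn HPi c Hc; eapply Hh; eauto; intros x Hx; apply HP0i, HPi, Hx))
      as [g1 [G1r G1i]].
    set (L2 := filt (fun a => ~ In a P0) L).
    assert (length L2 + length P0 <= length L)%nat by (apply filt_len; auto).
    assert (length P0 <> 0)%nat by (destruct P0; [contradiction|simpl; lia]).
    set (R2 := fun a b => R a b /\ ~ NBl R P0 b).
    edestruct (IH R2 L2) as [g2 [G2r G2i]].
    + lia.
    + unfold L2, filt. apply NoDup_filter; auto.
    + intros a Ha. apply In_filt in Ha. destruct (Hfin a) as [lb Hlb]. tauto.
      exists lb. intros b [Hb _]. auto.
    + intros Q HQn HQi c Hc.
      assert (NoDup (Q ++ P0)) as HQP.
      { apply NoDup_app; auto. intros x H1 H2. apply HQi in H1. apply In_filt in H1. tauto. }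
      destruct (NBl_fin R (Q ++ P0)) as [c' Hc'].
      { intros a Ha. apply Hfin. apply in_app_or in Ha. destruct Ha as [Ha|Ha].
        apply HQi in Ha. apply In_filt in Ha. tauto. apply HP0i; auto. }
      assert (length (Q ++ P0) <= c')%nat.
      { eapply Hh; eauto. intros x Hx. apply in_app_or in Hx. destruct Hx as [Hx|Hx].
        apply HQi in Hx. apply In_filt in Hx. tauto. apply HP0i; auto. }
      assert (HasCard (fun b => NBl R2 Q b \/ NBl R P0 b) (c + length P0)) as Hu.
      { apply card_disj; auto. intros b [[a [_ [_ Hn]]] Hb]. contradiction. }
      assert (c' = c + length P0)%nat.
      { eapply card_unique. exact Hc'. eapply HasCard_ext; [|exact Hu].
        intros b. split.
        - intros [[a [Ha Hr]]|Hb]. exists a. split. apply in_or_app; left; auto. destruct Hr; auto.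
          destruct Hb as [a [Ha Hr]]. exists a. split. apply in_or_app; right; auto. auto.
        - intros [a [Ha Hr]]. apply in_app_or in Ha. destruct (classic (NBl R P0 b)) as [Hb|Hb]; auto.
          left. destruct Ha as [Ha|Ha]. exists a. split; auto. split; auto.
          exfalso. apply Hb. exists a; auto. }
      rewrite length_app in *. lia.
    + exists (fun a => if dec (In a P0) then g1 a else g2 a). split.
      * intros a Ha. destruct (dec (In a P0)) as [Hin|Hin]; auto.
        apply G2r. apply In_filt. auto.
      * intros a a' Ha Ha'. destruct (dec (In a P0)) as [Hin|Hin]; destruct (dec (In a' P0)) as [Hin'|Hin'].
        -- apply G1i; auto.
        -- intros Heq. exfalso. assert (In a' L2) as HL2 by (apply In_filt; auto).
           destruct (G2r a' HL2) as [_ Hn]. apply Hn. rewrite <- Heq. exists a; split; auto.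
        -- intros Heq. exfalso. assert (In a L2) as HL2 by (apply In_filt; auto).
           destruct (G2r a HL2) as [_ Hn]. apply Hn. rewrite Heq. exists a'; split; auto.
        -- apply G2i; apply In_filt; auto.
  - destruct L as [|a L'].
    { exists d. split; [intros ? []|intros ? ? []]. }
    inversion Hnd as [|? ? HaL' HndL']; subst.
    destruct (NBl_fin R [a]) as [c1 Hc1]. { intros a0 [<-|[]]. apply Hfin; left; auto. }
    assert (1 <= c1)%nat. { apply (Hh [a]); auto. constructor; auto. constructor. intros x [<-|[]]; left; auto. }
    destruct (card_pos _ _ Hc1) as [b [a0 [[<-|[]] Hab]]]. lia.
    set (R' := fun x y => R x y /\ y <> b).
    edestruct (IH R' L') as [g' [Gr Gi]].
    + simpl in Hlen. lia.
    + auto.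
    + intros x Hx. destruct (Hfin x) as [lb Hlb]. right; auto. exists lb. intros y [Hy _]; auto.
    + intros Q HQn HQi c' Hc'.
      destruct Q as [|q Q0]. simpl; lia.
      destruct (NBl_fin R (q :: Q0)) as [c Hc].
      { intros x Hx. apply Hfin. right. apply HQi; auto. }
      assert (length (q :: Q0) <= c)%nat.
      { eapply Hh; eauto. intros x Hx; right; apply HQi; auto. }
      assert (length (q :: Q0) <= length L')%nat by (apply NoDup_incl_length; auto).
      assert (c <> length (q :: Q0)).
      { intros Heq. apply Hnt. exists (q :: Q0). repeat split; auto.
        intros x Hx; right; apply HQi; auto. discriminate. simpl in *; lia.
        rewrite <- Heq; auto. }
      assert (c <= c' + 1)%nat.
      { eapply (card_remove _ b). exact Hc. eapply HasCard_ext; [|exact Hc'].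
        intros y; split.
        - intros [x [Hx [Hr Hne]]]. split; auto. exists x; auto.
        - intros [[x [Hx Hr]] Hne]. exists x. split; auto. split; auto. }
      lia.
    + exists (fun x => if dec (x = a) then b else g' x). split.
      * intros x [E|Hx]. subst x. destruct (dec (a = a)); [auto|contradiction].
        destruct (dec (x = a)). subst; contradiction. apply Gr; auto.
      * intros x x' Hx Hx'.
        destruct (dec (x = a)) as [E|E]; destruct (dec (x' = a)) as [E'|E']; try congruence.
        -- intros Heq. destruct Hx' as [->|Hx']. contradiction. destruct (Gr x' Hx'); congruence.
        -- intros Heq. destruct Hx as [->|Hx]. contradiction. destruct (Gr x Hx); congruence.
        -- destruct Hx as [->|Hx]. contradiction. destruct Hx' as [->|Hx']. contradiction. apply Gi; auto.
Qed.

Import ListNotations.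
Open Scope R_scope.

Lemma set_ext {X : Type} (A B : X -> Prop) : (forall x, A x <-> B x) -> A = B.
Proof. intros H. apply functional_extensionality. intros x. apply propositional_extensionality. auto. Qed.

Fixpoint sumR (n : nat) (f : nat -> R) : R :=
  match n with O => 0 | S k => sumR k f + f k end.

Section Meas.
Context {X : Type} (mu : (X -> Prop) -> ereal) (Hm : IsMeasure mu) (H1 : mu (fun _ => True) = Fin 1).

Definition mr (A : X -> Prop) : R := match mu A with Fin r => r | PInf => 0 end.

Lemma mu_fin A : exists r, mu A = Fin r /\ 0 <= r <= 1.
Proof.
  destruct Hm as [Hpos [H0 Hadd]].
  assert (Disjoint A (fun x => ~ A x)) as D by (intros x [? ?]; auto).
  pose proof (Hadd _ _ D) as E.
  assert ((fun x => A x \/ ~ A x) = (fun _ => True)) as E2.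
  { apply set_ext. intros x; split; auto. intros _. apply classic. }
  cbv beta in E. rewrite E2, H1 in E. pose proof (Hpos A) as PA. pose proof (Hpos (fun x => ~ A x)) as PB.
  destruct (mu A) as [r|]; destruct (mu (fun x => ~ A x)) as [r'|]; simpl in E; try discriminate.
  inversion E. exists r. repeat split; lra.
Qed.

Lemma mr_eq A : mu A = Fin (mr A).
Proof. unfold mr. destruct (mu_fin A) as [r [-> _]]. auto. Qed.

Lemma mr_bounds A : 0 <= mr A <= 1.
Proof. unfold mr. destruct (mu_fin A) as [r [-> ?]]. auto. Qed.

Lemma mr_add A B : Disjoint A B -> mr (fun x => A x \/ B x) = mr A + mr B.
Proof.
  intros D. destruct Hm as [_ [_ Hadd]]. unfold mr at 1. rewrite (Hadd _ _ D).
  rewrite (mr_eq A), (mr_eq B). simpl. auto.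
Qed.

Lemma mr_ext A B : (forall x, A x <-> B x) -> mr A = mr B.
Proof. intros H. rewrite (set_ext A B H). auto. Qed.

Lemma mr_mono A B : (forall x, A x -> B x) -> mr A <= mr B.
Proof.
  intros H. rewrite (mr_ext B (fun x => A x \/ (B x /\ ~ A x))).
  - rewrite mr_add. pose proof (mr_bounds (fun x => B x /\ ~ A x)). lra.
    intros x [? [? ?]]; auto.
  - intros x; split. intros Hb. destruct (classic (A x)); auto. intros [?|[? ?]]; auto.
Qed.

Lemma mr_T : mr (fun _ => True) = 1.
Proof. unfold mr. rewrite H1. auto. Qed.

Lemma mr_big (n : nat) (C : nat -> X -> Prop) :
  (forall i i', (i < n)%nat -> (i' < n)%nat -> i <> i' -> Disjoint (C i) (C i')) ->
  mr (fun x => exists i, (i < n)%nat /\ C i x) = sumR n (fun i => mr (C i)).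
Proof.
  induction n as [|n IH]; intros D.
  - simpl. rewrite (mr_ext _ (fun _ => False)). destruct Hm as [_ [H0 _]]. unfold mr. rewrite H0. auto.
    intros x; split. intros [i [Hi _]]; lia. intros [].
  - simpl. rewrite <- IH by (intros; apply D; lia).
    rewrite <- mr_add.
    + apply mr_ext. intros x; split.
      * intros [i [Hi Hc]]. destruct (Nat.eq_dec i n). subst; right; auto. left; exists i; split; auto; lia.
      * intros [[i [Hi Hc]]|Hc]. exists i; split; auto. exists n; split; auto.
    + intros x [[i [Hi Hc]] Hc']. apply (D i n ltac:(lia) ltac:(lia) ltac:(lia) x). split; auto.
Qed.

End Meas.

Lemma sumR_ext n f g : (forall i, (i < n)%nat -> f i = g i) -> sumR n f = sumR n g.
Proof. induction n; simpl; intros H; auto. rewrite IHn, H; auto. Qed.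

Lemma meas_not_par {S X : Type} (alpha : S -> X -> option X) :
  DomainMeasurable alpha (fun _ => True) -> ~ Paradoxical alpha (fun _ => True).
Proof.
  intros [mu [Hm [H1 Hinv]]] [n [m [As [Bs [s [t [HA [HB [HcA [HdA [HcB [HdB [_ [_ [DA [DB DAB]]]]]]]]]]]]]]]].
  assert (Hi : forall u B, Subset B (Dom alpha u) -> mr mu B = mr mu (Img alpha u B)).
  { intros u B HBs. unfold mr. rewrite (Hinv u B HBs). auto. }
  assert (E1 : 1 = sumR n (fun i => mr mu (As i))).
  { rewrite <- (mr_T mu H1). rewrite (mr_ext mu _ (fun x => exists i, (i < n)%nat /\ Img alpha (s i) (As i) x)).
    rewrite mr_big; auto. apply sumR_ext. intros i Hi'. symmetry. apply Hi. apply HA; auto.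
    intros x. apply HcA. }
  assert (E2 : 1 = sumR m (fun i => mr mu (Bs i))).
  { rewrite <- (mr_T mu H1). rewrite (mr_ext mu _ (fun x => exists i, (i < m)%nat /\ Img alpha (t i) (Bs i) x)).
    rewrite mr_big; auto. apply sumR_ext. intros i Hi'. symmetry. apply Hi. apply HB; auto.
    intros x. apply HcB. }
  assert (E3 : mr mu (fun x => (exists i, (i < n)%nat /\ As i x) \/ (exists j, (j < m)%nat /\ Bs j x)) <= 1).
  { rewrite <- (mr_T mu H1). apply mr_mono; auto. }
  rewrite mr_add in E3; auto.
  - rewrite !mr_big in E3; auto. lra.
  - intros x [[i [Hi' Ha]] [j [Hj Hb]]]. apply (DAB i j Hi' Hj x). auto.
Qed.

Import ListNotations.
Open Scope R_scope.

Definition IsUltra {T : Type} (U : (T -> Prop) -> Prop) : Prop :=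
  (forall A B, U A -> U B -> U (fun x => A x /\ B x)) /\
  (forall A B, (forall x, A x -> B x) -> U A -> U B) /\
  ~ U (fun _ => False) /\
  (forall A, U A \/ U (fun x => ~ A x)).

Lemma U_nonempty {T} U (HU : @IsUltra T U) A : U A -> exists x, A x.
Proof.
  destruct HU as [_ [Hm [H0 _]]]. intros HA. apply NNPP. intros Hn. apply H0.
  eapply Hm; [|exact HA]. intros x Hx. apply Hn. eauto.
Qed.

Section ULim.
Context (U : (nat -> Prop) -> Prop) (HU : IsUltra U) (Hcof : forall N, U (fun n => (N <= n)%nat)).

Definition uspec (a : nat -> R) (L : R) : Prop :=
  forall eps, 0 < eps -> U (fun n => Rabs (a n - L) < eps).

Lemma U_T : U (fun _ => True).
Proof. destruct HU as [_ [Hm _]]. eapply Hm; [|apply (Hcof 0%nat)]. auto. Qed.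

Lemma uspec_exists a : (forall n, 0 <= a n <= 1) -> exists L, uspec a L.
Proof.
  intros Hb. destruct HU as [HI [Hm [H0 Hu]]].
  set (E := fun r => U (fun n => r <= a n)).
  assert (bound E) as Hbd.
  { exists 1. intros r Hr. destruct (Rle_dec r 1) as [Hr1|Hr1]; auto. exfalso.
    destruct (U_nonempty U HU _ Hr) as [n Hn]. specialize (Hb n). lra. }
  assert (exists r, E r) as Hne.
  { exists 0. unfold E. eapply Hm; [|apply U_T]. intros n _. apply Hb. }
  destruct (completeness E Hbd Hne) as [L [HL1 HL2]].
  exists L. intros eps Heps.
  assert (U (fun n => L - eps < a n)) as Ua.
  { apply NNPP. intros Hn.
    assert (is_upper_bound E (L - eps)).
    { intros r Hr. destruct (Rle_dec r (L - eps)) as [Hr1|Hr1]; auto. exfalso. apply Hn.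
      eapply Hm; [|exact Hr]. intros n Hrn. simpl in Hrn. lra. }
    specialize (HL2 _ H). lra. }
  assert (U (fun n => a n < L + eps)) as Ub.
  { destruct (Hu (fun n => a n < L + eps)) as [?|Hn]; auto.
    assert (E (L + eps)). { eapply Hm; [|exact Hn]. intros n Hnn. simpl in Hnn. lra. }
    specialize (HL1 _ H). lra. }
  eapply Hm; [|exact (HI _ _ Ua Ub)]. intros n [? ?]. apply Rabs_def1; lra.
Qed.

Lemma uspec_unique a L M : uspec a L -> uspec a M -> L = M.
Proof.
  intros HL HM. destruct (Req_dec L M) as [|Hne]; auto. exfalso.
  set (eps := Rabs (L - M) / 2).
  assert (0 < eps) by (unfold eps; apply Rlt_gt in Hne || idtac; assert (0 < Rabs (L - M)) by (apply Rabs_pos_lt; lra); lra).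
  destruct HU as [HI _].
  destruct (U_nonempty U HU _ (HI _ _ (HL eps H) (HM eps H))) as [n [H1 H2]].
  assert (Rabs (L - M) <= Rabs (a n - L) + Rabs (a n - M)).
  { replace (L - M) with (-(a n - L) + (a n - M)) by ring.
    eapply Rle_trans. apply Rabs_triang. rewrite Rabs_Ropp. lra. }
  unfold eps in *. lra.
Qed.

Lemma uspec_add a b L M : uspec a L -> uspec b M -> uspec (fun n => a n + b n) (L + M).
Proof.
  intros HL HM eps Heps. destruct HU as [HI [Hm _]].
  eapply Hm; [|exact (HI _ _ (HL (eps/2) ltac:(lra)) (HM (eps/2) ltac:(lra)))].
  intros n [H1 H2]. replace (a n + b n - (L + M)) with ((a n - L) + (b n - M)) by ring.
  eapply Rle_lt_trans. apply Rabs_triang. lra.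
Qed.

Lemma uspec_const c : uspec (fun _ => c) c.
Proof.
  intros eps Heps. destruct HU as [_ [Hm _]]. eapply Hm; [|apply U_T].
  intros n _. replace (c - c) with 0 by ring. rewrite Rabs_R0. auto.
Qed.

Lemma uspec_close a b L :
  uspec a L -> (forall eps, 0 < eps -> exists N, forall n, (N <= n)%nat -> Rabs (a n - b n) < eps) ->
  uspec b L.
Proof.
  intros HL Hc eps Heps. destruct HU as [HI [Hm _]].
  destruct (Hc (eps/2) ltac:(lra)) as [N HN].
  eapply Hm; [|exact (HI _ _ (HL (eps/2) ltac:(lra)) (Hcof N))].
  intros n [H1 H2]. specialize (HN n H2).
  replace (b n - L) with (-(a n - b n) + (a n - L)) by ring.
  eapply Rle_lt_trans. apply Rabs_triang. rewrite Rabs_Ropp. lra.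
Qed.

Lemma uspec_nonneg a L : (forall n, 0 <= a n) -> uspec a L -> 0 <= L.
Proof.
  intros Ha HL. destruct (Rle_dec 0 L) as [|Hn]; auto. exfalso.
  destruct (U_nonempty U HU _ (HL (- L) ltac:(lra))) as [n Hn'].
  specialize (Ha n). apply Rabs_def2 in Hn'. lra.
Qed.

Definition ulim (a : nat -> R) : R :=
  match dec (exists L, uspec a L) with
  | left h => proj1_sig (constructive_indefinite_description _ h)
  | right _ => 0 end.

Lemma ulim_spec a L : uspec a L -> ulim a = L.
Proof.
  intros H. unfold ulim. destruct (dec (exists L, uspec a L)) as [h|h].
  - destruct (constructive_indefinite_description _ h) as [M HM]. simpl. eapply uspec_unique; eauto.
  - exfalso. apply h. eauto.
Qed.

End ULim.

Lemma ultra_nat : exists U : (nat -> Prop) -> Prop, IsUltra U /\ forall N, U (fun n => (N <= n)%nat).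
Proof.
  destruct (UltraBridge.ultra_exists nat (fun A => exists N, forall n, (N <= n)%nat -> A n))
    as [U [Hb [HI [Hm [H0 Hu]]]]].
  - exists 0%nat. auto.
  - intros A B [N1 H1] [N2 H2]. exists (N1 + N2)%nat. intros n Hn. split; [apply H1|apply H2]; lia.
  - intros A B H [N HN]. exists N. auto.
  - intros [N HN]. apply (HN N). lia.
  - exists U. split. repeat split; auto. intros N. apply Hb. exists N. auto.
Qed.

Import ListNotations.
Open Scope R_scope.

Lemma star_inv {S X : Type} (mul : S -> S -> S) (e : S) (alpha : S -> X -> option X) :
  IsInverseSemigroup mul -> IsRepresentation mul e alpha ->
  forall s, exists t, forall x y, alpha s x = Some y -> alpha t y = Some x.
Proof.
  intros [_ HS] [Hpb [Hhom _]] s. destruct (HS s) as [t [[H1 _] _]]. exists t.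
  intros x y Hxy.
  assert (E : alpha (mul (mul s t) s) x = Some y) by (rewrite H1; auto).
  rewrite Hhom in E. unfold pcomp in E. rewrite Hxy in E. rewrite Hhom in E. unfold pcomp in E.
  destruct (alpha t y) as [w|] eqn:Ew; [|discriminate].
  f_equal. eapply Hpb; eauto.
Qed.

Definition Bd {S X : Type} (alpha : S -> X -> option X) (s : S) (F : list X) : X -> Prop :=
  fun y => Img alpha s (fun x => In x F /\ Dom alpha s x) y /\ ~ In y F.

Lemma card_filt {X : Type} (A : X -> Prop) (F : list X) :
  NoDup F -> HasCard (fun x => In x F /\ A x) (length (filt A F)).
Proof.
  intros H. exists (filt A F). split; [|split; [|reflexivity]].
  - unfold filt. apply NoDup_filter; auto.
  - intros x. rewrite In_filt. tauto.
Qed.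

Section Count.
Context {S X : Type} (alpha : S -> X -> option X) (Hpb : forall s, PartialBijection (alpha s))
  (s t : S) (Hst : forall x y, alpha s x = Some y -> alpha t y = Some x)
  (B : X -> Prop) (HB : Subset B (Dom alpha s)) (F : list X) (HF : NoDup F).

Lemma count1 k : HasCard (Bd alpha s F) k ->
  (length (filt B F) <= length (filt (Img alpha s B) F) + k)%nat.
Proof.
  intros Hk.
  assert (HQ : HasCard (fun y => exists x, (In x F /\ B x) /\ alpha s x = Some y) (length (filt B F))).
  { apply card_img. apply Hpb. intros x [_ Hx]. apply HB; auto. apply card_filt; auto. }
  destruct (card_fin_of _ _ Hk) as [lb Hlb].
  destruct (fin_card (fun y => (In y F /\ Img alpha s B y) \/ Bd alpha s F y) (F ++ lb)) as [c Hc].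
  { intros y [[? ?]|?]; apply in_or_app; auto. }
  assert (length (filt B F) <= c)%nat.
  { eapply card_le; [|exact HQ|exact Hc]. intros y [x [[Hx Hb] Hy]].
    destruct (classic (In y F)).
    - left. split; [auto| exists x; auto].
    - right. split; [|auto]. exists x. split; [|auto]. split; [auto|]. exists y; auto. }
  assert (c <= length (filt (Img alpha s B) F) + k)%nat.
  { eapply card_union_le; [apply card_filt; auto|exact Hk|exact Hc]. }
  lia.
Qed.

Lemma count2 k : HasCard (Bd alpha t F) k ->
  (length (filt (Img alpha s B) F) <= length (filt B F) + k)%nat.
Proof.
  intros Hk.
  assert (HQ : HasCard (fun x => exists y, (In y F /\ Img alpha s B y) /\ alpha t y = Some x)
                 (length (filt (Img alpha s B) F))).
  { apply card_img. apply Hpb. intros y [_ [x [_ Hx]]]. exists x. apply Hst; auto. apply card_filt; auto. }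
  destruct (card_fin_of _ _ Hk) as [lb Hlb].
  destruct (fin_card (fun y => (In y F /\ B y) \/ Bd alpha t F y) (F ++ lb)) as [c Hc].
  { intros y [[? ?]|?]; apply in_or_app; auto. }
  assert (length (filt (Img alpha s B) F) <= c)%nat.
  { eapply card_le; [|exact HQ|exact Hc]. intros x [y [[Hy [x' [Hb Hx']]] Hyx]].
    assert (x' = x) by (apply Hst in Hx'; congruence). subst x'.
    destruct (classic (In x F)).
    - left. split; auto.
    - right. split; [|auto]. exists y. split; [|auto]. split; [auto|]. exists x; auto. }
  assert (c <= length (filt B F) + k)%nat.
  { eapply card_union_le; [apply card_filt; auto|exact Hk|exact Hc]. }
  lia.
Qed.
End Count.

Lemma filt_len_le {X : Type} (A : X -> Prop) (F : list X) : (length (filt A F) <= length F)%nat.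
Proof. unfold filt. induction F; simpl; auto. destruct (if dec (A a) then true else false); simpl; lia. Qed.

Lemma folner_meas {S X : Type} (mul : S -> S -> S) (e : S) (alpha : S -> X -> option X) :
  IsInverseSemigroup mul -> IsRepresentation mul e alpha ->
  DomainFolner alpha (fun _ => True) -> DomainMeasurable alpha (fun _ => True).
Proof.
  intros HS Ha [F [HF Hfol]].
  destruct ultra_nat as [U [HU Hcof]].
  assert (Hlen : forall n, (0 < length (F n))%nat).
  { intros n. destruct (HF n) as [_ [Hne _]]. destruct (F n); [contradiction|simpl; lia]. }
  set (a := fun (A : X -> Prop) n => INR (length (filt A (F n))) / INR (length (F n))).
  assert (Hab : forall A n, 0 <= a A n <= 1).
  { intros A n. unfold a. pose proof (Hlen n). pose proof (filt_len_le A (F n)).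
    apply lt_INR in H. apply le_INR in H0. simpl in H. split.
    unfold Rdiv; apply Rmult_le_pos; [apply pos_INR| left; apply Rinv_0_lt_compat; auto].
    apply Rmult_le_reg_r with (INR (length (F n))); auto. unfold Rdiv. rewrite Rmult_assoc, Rinv_l; lra. }
  assert (Hsp : forall A, uspec U (a A) (ulim U (a A))).
  { intros A. destruct (uspec_exists U HU Hcof (a A) (Hab A)) as [L HL].
    rewrite (ulim_spec U HU (a A) L HL). auto. }
  exists (fun A => Fin (ulim U (a A))). split; [|split].
  - split; [|split].
    + intros A. eapply uspec_nonneg; eauto. intros n; apply Hab.
    + f_equal. apply (ulim_spec U HU). eapply (uspec_close U HU Hcof (fun _ => 0)). apply uspec_const; auto.
      intros eps Heps. exists 0%nat. intros n _. unfold a.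
      replace (length (filt (fun _ : X => False) (F n))) with 0%nat.
      simpl. unfold Rdiv. rewrite Rmult_0_l, Rminus_0_r, Rabs_R0. auto.
      symmetry. apply length_zero_iff_nil. destruct (filt (fun _ => False) (F n)) as [|x l] eqn:E; auto.
      exfalso. assert (In x (filt (fun _ => False) (F n))) as Hx by (rewrite E; left; auto). apply In_filt in Hx. tauto.
    + intros A B D. simpl. f_equal. apply (ulim_spec U HU).
      eapply (uspec_close U HU Hcof (fun n => a A n + a B n)).
      apply uspec_add; auto.
      intros eps Heps. exists 0%nat. intros n _.
      assert (length (filt (fun x => A x \/ B x) (F n)) = length (filt A (F n)) + length (filt B (F n)))%nat as E.
      { eapply card_unique. apply card_filt. apply HF.
        eapply HasCard_ext; [|apply card_disj; [|apply card_filt, HF|apply card_filt, HF]].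
        - intros x; split. intros [[? ?]|[? ?]]; auto. intros [? [?|?]]; auto.
        - intros x [[_ ?] [_ ?]]. apply (D x); auto. }
      unfold a. rewrite E, plus_INR. unfold Rdiv. rewrite Rmult_plus_distr_r.
      replace (_ - _) with 0 by ring. rewrite Rabs_R0. auto.
  - f_equal. apply (ulim_spec U HU). eapply (uspec_close U HU Hcof (fun _ => 1)). apply uspec_const; auto.
    intros eps Heps. exists 0%nat. intros n _. unfold a.
    assert (length (filt (fun _ => True) (F n)) = length (F n)) as E.
    { eapply card_unique. apply card_filt, HF. eapply HasCard_ext; [|apply HasCard_list, HF]. intros; tauto. }
    rewrite E. pose proof (Hlen n) as H. apply lt_INR in H. simpl in H.
    unfold Rdiv. rewrite Rinv_r by lra. replace (1 - 1) with 0 by ring. rewrite Rabs_R0; auto.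
  - intros s B HB. f_equal.
    destruct (star_inv mul e alpha HS Ha s) as [t Hst].
    destruct Ha as [Hpb _].
    symmetry. apply (ulim_spec U HU). eapply (uspec_close U HU Hcof (a B)); auto.
    intros eps Heps.
    destruct (Hfol s (eps/2) ltac:(lra)) as [N1 HN1].
    destruct (Hfol t (eps/2) ltac:(lra)) as [N2 HN2].
    exists (N1 + N2)%nat. intros n Hn.
    destruct (HN1 n ltac:(lia)) as [k1 [Hk1 Hr1]].
    destruct (HN2 n ltac:(lia)) as [k2 [Hk2 Hr2]].
    destruct (HF n) as [HFn _].
    pose proof (count1 alpha Hpb s B HB (F n) HFn k1 Hk1) as C1.
    pose proof (count2 alpha Hpb s t Hst B (F n) HFn k2 Hk2) as C2.
    apply le_INR in C1. apply le_INR in C2. rewrite plus_INR in C1, C2.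
    pose proof (Hlen n) as H. apply lt_INR in H. simpl in H.
    unfold a. set (l := INR (length (F n))) in *.
    set (cb := INR (length (filt B (F n)))) in *. set (ci := INR (length (filt (Img alpha s B) (F n)))) in *.
    assert (INR k1 < eps / 2 * l).
    { apply Rmult_lt_reg_r with (/ l). apply Rinv_0_lt_compat; lra.
      rewrite Rmult_assoc, Rinv_r by lra. lra. }
    assert (INR k2 < eps / 2 * l).
    { apply Rmult_lt_reg_r with (/ l). apply Rinv_0_lt_compat; lra.
      rewrite Rmult_assoc, Rinv_r by lra. lra. }
    replace (cb / l - ci / l) with ((cb - ci) / l) by (field; lra).
    unfold Rdiv. rewrite Rabs_mult, Rabs_inv, (Rabs_right l) by lra.
    apply Rmult_lt_reg_r with l; auto. rewrite Rmult_assoc, Rinv_l by lra.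
    rewrite Rmult_1_r. apply Rabs_def1; lra.
Qed.

Import ListNotations.

Lemma choice_fun {A B : Type} (P : A -> B -> Prop) : (forall a, exists b, P a b) -> exists f : A -> B, forall a, P a (f a).
Proof.
  intros H. exists (fun a => proj1_sig (constructive_indefinite_description _ (H a))).
  intros a. destruct (constructive_indefinite_description _ (H a)). auto.
Qed.

Lemma U_finite {T A : Type} U (HU : @IsUltra T U) (l : list A) (Z : A -> T -> Prop) :
  U (fun E => exists x, In x l /\ Z x E) -> exists x, In x l /\ U (Z x).
Proof.
  induction l as [|a l IH]; intros H.
  - destruct (U_nonempty U HU _ H) as [E [x [[] _]]].
  - destruct HU as [HI [Hm [H0 Hu]]]. destruct (Hu (Z a)) as [Ha|Hna].
    + exists a. split; auto. left; auto.
    + destruct IH as [x [Hx HZ]].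
      * eapply Hm; [|exact (HI _ _ H Hna)]. intros E [[x [[<-|Hx] Hz]] Hn]. contradiction. eauto.
      * exists x. split; auto. right; auto.
Qed.

Definition Nb {S X : Type} (alpha : S -> X -> option X) (W : list S) (P : X -> Prop) : X -> Prop :=
  fun y => exists w x, In w W /\ P x /\ alpha w x = Some y.

Definition cand {S X : Type} (alpha : S -> X -> option X) (W : list S) (y : X) : list X :=
  flat_map (fun w => match alpha w y with Some x => [x] | None => [] end) W.

Lemma In_cand {S X : Type} (alpha : S -> X -> option X) W y x :
  In x (cand alpha W y) <-> exists w, In w W /\ alpha w y = Some x.
Proof.
  unfold cand. rewrite in_flat_map. split.
  - intros [w [Hw Hx]]. destruct (alpha w y) eqn:E; [|destruct Hx]. destruct Hx as [<-|[]]. eauto.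
  - intros [w [Hw Hx]]. exists w. rewrite Hx. split; auto. left; auto.
Qed.

Section Par.
Context {S X : Type} (mul : S -> S -> S) (e : S) (alpha : S -> X -> option X)
  (HS : IsInverseSemigroup mul) (Ha : IsRepresentation mul e alpha)
  (W : list S)
  (Hexp : forall P k c, HasCard P k -> HasCard (Nb alpha W P) c -> (2 * k <= c)%nat).

Definition nbr (y x : X) : Prop := exists w, In w W /\ alpha w y = Some x.

Lemma harem_finite (E : list X) : exists pq : (X -> X) * (X -> X),
  (forall y, In y E -> nbr y (fst pq y) /\ nbr y (snd pq y)) /\
  (forall y y', In y E -> In y' E -> fst pq y = fst pq y' -> y = y') /\
  (forall y y', In y E -> In y' E -> snd pq y = snd pq y' -> y = y') /\
  (forall y y', In y E -> In y' E -> fst pq y <> snd pq y').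
Proof.
  set (E' := nodup nodup_dec E).
  set (L := flat_map (fun y => [(y, true); (y, false)]) E').
  assert (HL : forall y b, In (y, b) L <-> In y E).
  { intros y b. unfold L. rewrite in_flat_map. split.
    - intros [y' [Hy' Hin]]. apply nodup_In in Hy'. destruct Hin as [E1|[E1|[]]]; inversion E1; subst; auto.
    - intros Hy. exists y. split. apply nodup_In; auto. destruct b; simpl; auto. }
  assert (HLnd : NoDup L).
  { unfold L. assert (NoDup E') by apply NoDup_nodup. clear HL. induction E' as [|y E'' IH].
    - constructor.
    - inversion H; subst. simpl. constructor.
      + intros [E1|Hin]. discriminate. apply in_flat_map in Hin. destruct Hin as [y' [? [E1|[E1|[]]]]]; inversion E1; subst; auto.
      + constructor. intros Hin. apply in_flat_map in Hin. destruct Hin as [y' [? [E1|[E1|[]]]]]; inversion E1; subst; auto.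
        apply IH; auto. }
  set (R := fun (yb : X * bool) x => nbr (fst yb) x).
  destruct (hall (fun yb => fst yb) (length L) R L) as [g [Gr Gi]]; auto.
  - intros [y b] _. exists (cand alpha W y). intros x Hx. apply In_cand. exact Hx.
  - intros Pd HPn HPi c Hc.
    destruct (fin_card (fun y => In y (map fst Pd)) (map fst Pd)) as [k' Hk']; auto.
    destruct Hk' as [l' [Hl'n [Hl'i Hl'l]]].
    assert (length Pd <= 2 * k')%nat.
    { rewrite <- Hl'l. replace (2 * length l')%nat with (length (map (fun y => (y, true)) l' ++ map (fun y => (y, false)) l')).
      apply NoDup_incl_length; auto.
      intros [y b] Hyb. apply in_or_app. assert (In y l'). { apply Hl'i. apply in_map_iff. exists (y, b); auto. }
      destruct b; [left|right]; apply in_map_iff; exists y; auto.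
      rewrite length_app, !length_map. lia. }
    assert (2 * k' <= c)%nat.
    { apply (Hexp (fun y => In y l')). exists l'; split; [auto|split; [intros; tauto|auto]].
      eapply HasCard_ext; [|exact Hc]. intros x. split.
      - intros [[y b] [Hyb [w [Hw Hx]]]]. exists w, y. split; auto. split; auto.
        apply Hl'i. apply in_map_iff. exists (y, b); auto.
      - intros [w [y [Hw [Hy Hx]]]]. apply Hl'i in Hy. apply in_map_iff in Hy.
        destruct Hy as [[y' b] [E1 Hin]]. simpl in E1. subst y'. exists (y, b). split; auto. exists w; auto. }
    lia.
  - exists (fun y => g (y, true), fun y => g (y, false)). simpl. repeat split.
    + apply (Gr (y, true)). apply HL; auto.
    + apply (Gr (y, false)). apply HL; auto.
    + intros y y' Hy Hy' Heq. apply Gi in Heq; [congruence| apply HL; auto| apply HL; auto].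
    + intros y y' Hy Hy' Heq. apply Gi in Heq; [congruence| apply HL; auto| apply HL; auto].
    + intros y y' Hy Hy' Heq. apply Gi in Heq; [congruence| apply HL; auto| apply HL; auto].
Qed.

Lemma harem_global : exists p q : X -> X,
  (forall y, nbr y (p y) /\ nbr y (q y)) /\
  (forall y y', p y = p y' -> y = y') /\
  (forall y y', q y = q y' -> y = y') /\
  (forall y y', p y <> q y').
Proof.
  destruct (choice_fun _ harem_finite) as [PQ HPQ].
  destruct (UltraBridge.ultra_exists (list X) (fun Z => exists E0, forall E, incl E0 E -> Z E))
    as [U [Hb [HI [Hm [H0 Hu]]]]].
  - exists []. auto.
  - intros A B [E1 H1] [E2 H2]. exists (E1 ++ E2). intros E HE. split.
    apply H1. intros x Hx; apply HE, in_or_app; auto. apply H2. intros x Hx; apply HE, in_or_app; auto.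
  - intros A B H [E0 HE]. exists E0. auto.
  - intros [E0 HE]. apply (HE E0). intros x; auto.
  - assert (HU : IsUltra U) by (repeat split; auto).
    assert (Uy : forall y, U (fun E => In y E)). { intros y. apply Hb. exists [y]. intros E HE. apply HE. left; auto. }
    assert (Hp : forall y, exists x, In x (cand alpha W y) /\ U (fun E => In y E /\ fst (PQ E) y = x)).
    { intros y. apply (U_finite U HU (cand alpha W y) (fun x E => In y E /\ fst (PQ E) y = x)).
      eapply Hm; [|exact (Uy y)]. intros E HyE. exists (fst (PQ E) y). split; auto.
      apply In_cand. apply (proj1 (HPQ E) y HyE). }
    assert (Hq : forall y, exists x, In x (cand alpha W y) /\ U (fun E => In y E /\ snd (PQ E) y = x)).
    { intros y. apply (U_finite U HU (cand alpha W y) (fun x E => In y E /\ snd (PQ E) y = x)).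
      eapply Hm; [|exact (Uy y)]. intros E HyE. exists (snd (PQ E) y). split; auto.
      apply In_cand. apply (proj1 (HPQ E) y HyE). }
    destruct (choice_fun _ Hp) as [p Hp']. destruct (choice_fun _ Hq) as [q Hq'].
    exists p, q. split; [|split; [|split]].
    + intros y. split; apply In_cand; [apply Hp'|apply Hq'].
    + intros y y' Heq. destruct (U_nonempty U HU _ (HI _ _ (proj2 (Hp' y)) (proj2 (Hp' y')))) as [E [[Hy E1] [Hy' E2]]].
      apply (proj1 (proj2 (HPQ E))); auto. congruence.
    + intros y y' Heq. destruct (U_nonempty U HU _ (HI _ _ (proj2 (Hq' y)) (proj2 (Hq' y')))) as [E [[Hy E1] [Hy' E2]]].
      apply (proj1 (proj2 (proj2 (HPQ E)))); auto. congruence.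
    + intros y y' Heq. destruct (U_nonempty U HU _ (HI _ _ (proj2 (Hp' y)) (proj2 (Hq' y')))) as [E [[Hy E1] [Hy' E2]]].
      apply (proj2 (proj2 (proj2 (HPQ E))) y y'); auto. congruence.
Qed.

Lemma par_of_exp : Paradoxical alpha (fun _ => True).
Proof.
  destruct harem_global as [p [q [Hn [Hpi [Hqi Hpq]]]]].
  destruct (choice_fun _ (star_inv mul e alpha HS Ha)) as [st Hst].
  assert (Hip : forall y, exists i, (i < length W)%nat /\ alpha (nth i W e) y = Some (p y)).
  { intros y. destruct (Hn y) as [[w [Hw Hx]] _]. apply In_nth with (d := e) in Hw.
    destruct Hw as [i [Hi Ei]]. exists i. subst. auto. }
  assert (Hiq : forall y, exists i, (i < length W)%nat /\ alpha (nth i W e) y = Some (q y)).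
  { intros y. destruct (Hn y) as [_ [w [Hw Hx]]]. apply In_nth with (d := e) in Hw.
    destruct Hw as [i [Hi Ei]]. exists i. subst. auto. }
  destruct (choice_fun _ Hip) as [ip Hip']. destruct (choice_fun _ Hiq) as [iq Hiq'].
  set (m := length W).
  set (sA := fun i => st (nth i W e)).
  assert (ImgA : forall i z, Img alpha (sA i) (fun x => exists y, ip y = i /\ p y = x) z -> ip z = i).
  { intros i z [x [[y [Ey Ex]] Hz]]. subst. unfold sA in Hz.
    rewrite (Hst _ _ _ (proj2 (Hip' y))) in Hz. congruence. }
  assert (ImgB : forall i z, Img alpha (sA i) (fun x => exists y, iq y = i /\ q y = x) z -> iq z = i).
  { intros i z [x [[y [Ey Ex]] Hz]]. subst. unfold sA in Hz.
    rewrite (Hst _ _ _ (proj2 (Hiq' y))) in Hz. congruence. }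
  exists m, m, (fun i x => exists y, ip y = i /\ p y = x), (fun i x => exists y, iq y = i /\ q y = x), sA, sA.
  split; [|split; [|split; [|split; [|split; [|split; [|split; [|split; [|split; [|split]]]]]]]]].
  - intros i _ x [y [Ey <-]]. subst. exists y. unfold sA. apply Hst. apply Hip'.
  - intros i _ x [y [Ey <-]]. subst. exists y. unfold sA. apply Hst. apply Hiq'.
  - intros y. split; auto. intros _. exists (ip y). split. apply Hip'.
    exists (p y). split. exists y; auto. unfold sA. apply Hst. apply Hip'.
  - intros i i' _ _ Hne z [H1 H2]. apply Hne. apply ImgA in H1. apply ImgA in H2. congruence.
  - intros y. split; auto. intros _. exists (iq y). split. apply Hiq'.
    exists (q y). split. exists y; auto. unfold sA. apply Hst. apply Hiq'.
  - intros i i' _ _ Hne z [H1 H2]. apply Hne. apply ImgB in H1. apply ImgB in H2. congruence.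
  - auto.
  - auto.
  - intros i i' _ _ Hne x [[y [E1 E2]] [y' [E1' E2']]]. apply Hne. subst. rewrite (Hpi y y'); auto.
  - intros i i' _ _ Hne x [[y [E1 E2]] [y' [E1' E2']]]. apply Hne. subst. rewrite (Hqi y y'); auto.
  - intros i j _ _ x [[y [E1 E2]] [y' [E1' E2']]]. apply (Hpq y y'). congruence.
Qed.
End Par.

Import ListNotations.

Lemma bernoulli a m : (a ^ (S m) + m * a ^ m <= a * (a + 1) ^ m)%nat.
Proof.
  induction m as [|m IH]; simpl; [lia|].
  rewrite Nat.pow_succ_r' in *. simpl in *. nia.
Qed.

Section Exp.
Context {Sg X : Type} (mul : Sg -> Sg -> Sg) (e : Sg) (alpha : Sg -> X -> option X)
  (HS : IsInverseSemigroup mul) (Ha : IsRepresentation mul e alpha)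
  (f : nat -> Sg) (Hf : forall s, exists n, f n = s).

Lemma Nb_fin W (P : X -> Prop) k : HasCard P k -> exists c, HasCard (Nb alpha W P) c.
Proof.
  intros HP. destruct (card_fin_of _ _ HP) as [l Hl].
  apply (fin_card _ (flat_map (cand alpha W) l)).
  intros y [w [x [Hw [Hx Hy]]]]. apply in_flat_map. exists x. split; auto. apply In_cand. eauto.
Qed.

Lemma Bd_fin s l : exists c, HasCard (Bd alpha s l) c.
Proof.
  apply (fin_card _ (flat_map (cand alpha [s]) l)).
  intros y [[x [[Hx _] Hy]] _]. apply in_flat_map. exists x. split; auto. apply In_cand. exists s. split; auto. left; auto.
Qed.

Lemma not_folner_exp : ~ DomainFolner alpha (fun _ => True) ->
  exists N, forall l, NoDup l -> l <> [] -> exists k, (k <= N)%nat /\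
    forall c, HasCard (Bd alpha (f k) l) c -> (length l <= (N + 1) * c)%nat.
Proof.
  intros Hnf. apply NNPP. intros Hn. apply Hnf.
  assert (Hg : forall N, exists l, NoDup l /\ l <> [] /\ forall k, (k <= N)%nat ->
             exists c, HasCard (Bd alpha (f k) l) c /\ ((N + 1) * c < length l)%nat).
  { intros N. apply NNPP. intros H2. apply Hn. exists N. intros l Hl Hne. apply NNPP. intros H3. apply H2.
    exists l. split; auto. split; auto. intros k Hk. destruct (Bd_fin (f k) l) as [c Hc].
    exists c. split; auto. destruct (lt_dec ((N + 1) * c) (length l)) as [|Hlt]; auto.
    exfalso. apply H3. exists k. split; auto. intros c' Hc'. rewrite (card_unique _ _ _ Hc' Hc). lia. }
  destruct (choice_fun _ Hg) as [F HF].
  exists F. split.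
  - intros n. destruct (HF n) as [? [? _]]. auto.
  - intros s eps Heps. destruct (Hf s) as [k <-].
    destruct (INR_archimed eps 1 Heps) as [N0 HN0].
    exists (N0 + k)%nat. intros n Hnn.
    destruct (HF n) as [_ [Hne Hb]]. destruct (Hb k ltac:(lia)) as [c [Hc Hlt]].
    exists c. split; auto.
    apply lt_INR in Hlt. rewrite mult_INR, plus_INR in Hlt. simpl in Hlt.
    assert (INR N0 <= INR n) by (apply le_INR; lia).
    assert (0 <= INR c) by apply pos_INR.
    assert (0 < INR (length (F n))) by (pose proof (pos_INR n); nra).
    assert (INR c < eps * INR (length (F n))).
    { assert (eps * ((INR n + 1) * INR c) < eps * INR (length (F n))) by (apply Rmult_lt_compat_l; auto).
      assert (1 <= eps * (INR n + 1)) by nra.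
      assert (INR c <= eps * (INR n + 1) * INR c) by nra. lra. }
    apply Rmult_lt_reg_r with (INR (length (F n))); auto.
    unfold Rdiv. rewrite Rmult_assoc, Rinv_l by lra. lra.
Qed.

Variable N : nat.
Hypothesis HN : forall l, NoDup l -> l <> [] -> exists k, (k <= N)%nat /\
    forall c, HasCard (Bd alpha (f k) l) c -> (length l <= (N + 1) * c)%nat.

Definition K' : list Sg := e :: map f (seq 0 (S N)).

Fixpoint Wm (m : nat) : list Sg :=
  match m with O => [e] | S m' => flat_map (fun u => map (mul u) (Wm m')) K' end.

Lemma Nb_zero P y : Nb alpha [e] P y <-> P y.
Proof.
  destruct Ha as [_ [_ He]]. split.
  - intros [w [x [[<-|[]] [Hx Hy]]]]. rewrite He in Hy. congruence.
  - intros Hy. exists e, y. split; [left; auto|split; auto].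
Qed.

Lemma Nb_step m P y : Nb alpha (Wm (S m)) P y <-> Nb alpha K' (Nb alpha (Wm m) P) y.
Proof.
  destruct Ha as [_ [Hh _]]. cbn [Wm]. split.
  - intros [w' [x [Hw' [Hx Hy]]]]. apply in_flat_map in Hw'. destruct Hw' as [u [Hu Hw']].
    apply in_map_iff in Hw'. destruct Hw' as [w [<- Hw]].
    rewrite Hh in Hy. unfold pcomp in Hy. destruct (alpha w x) as [z|] eqn:Ez; [|discriminate].
    exists u, z. split; auto. split; auto. exists w, x. auto.
  - intros [u [z [Hu [[w [x [Hw [Hx Hz]]]] Hy]]]]. exists (mul u w), x. split.
    + apply in_flat_map. exists u. split; auto. apply in_map; auto.
    + split; auto. rewrite Hh. unfold pcomp. rewrite Hz. auto.
Qed.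

Lemma expand1 P k : HasCard P k -> exists c, HasCard (Nb alpha K' P) c /\ ((N + 2) * k <= (N + 1) * c)%nat.
Proof.
  intros HP. destruct (Nb_fin K' P k HP) as [c Hc]. exists c. split; auto.
  destruct k as [|k]. lia.
  destruct HP as [l [Hln [Hli Hll]]].
  destruct (HN l Hln) as [k0 [Hk0 Hk0']]. { intros E; subst; discriminate. }
  destruct (Bd_fin (f k0) l) as [c0 Hc0]. specialize (Hk0' c0 Hc0).
  assert (HasCard (fun y => P y \/ Bd alpha (f k0) l y) (S k + c0)) as Hu.
  { apply card_disj; [intros y [Hy [_ Hn]]; apply Hn, Hli, Hy | exists l; split; [|split]; auto | auto]. }
  assert (S k + c0 <= c)%nat.
  { eapply card_le; [|exact Hu|exact Hc]. destruct Ha as [_ [_ He]]. intros y [Hy|[[x [[Hx _] Hxy]] _]].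
    - exists e, y. split; [left; auto|split; auto].
    - exists (f k0), x. split; [right; apply in_map, in_seq; lia|split; auto]. apply Hli; auto. }
  rewrite Hll in Hk0'. nia.
Qed.

Lemma expand_iter m : forall P k, HasCard P k ->
  exists c, HasCard (Nb alpha (Wm m) P) c /\ ((N + 2) ^ m * k <= (N + 1) ^ m * c)%nat.
Proof.
  induction m as [|m IH]; intros P k HP.
  - exists k. split. eapply HasCard_ext; [|exact HP]. intros y; rewrite Nb_zero; tauto. simpl; lia.
  - destruct (IH P k HP) as [c [Hc Hle]].
    destruct (expand1 _ _ Hc) as [c' [Hc' Hle']].
    exists c'. split.
    + eapply HasCard_ext; [|exact Hc']. intros y. rewrite Nb_step. tauto.
    + rewrite !Nat.pow_succ_r'. nia.
Qed.

Lemma Hexp_final : forall P k c, HasCard P k -> HasCard (Nb alpha (Wm (S N)) P) c -> (2 * k <= c)%nat.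
Proof.
  intros P k c HP Hc. destruct (expand_iter (S N) P k HP) as [c' [Hc' Hle]].
  rewrite (card_unique _ _ _ Hc Hc').
  pose proof (bernoulli (N + 1) (S N)) as B.
  replace (N + 1 + 1)%nat with (N + 2)%nat in B by lia.
  set (A := ((N + 1) ^ S N)%nat) in *.
  assert (0 < A)%nat by (unfold A; apply Nat.neq_0_lt_0, Nat.pow_nonzero; lia).
  assert ((N + 1) ^ S (S N) = (N + 1) * A)%nat as E by (unfold A; rewrite Nat.pow_succ_r'; auto).
  rewrite E in B.
  assert (2 * A <= (N + 2) ^ S N)%nat by nia.
  apply (Nat.mul_le_mono_pos_l _ _ A); auto. nia.
Qed.

End Exp.

Theorem mainTheorem4 (S X : Type) (mul : S -> S -> S) (e : S)
  (alpha : S -> X -> option X)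
  (HS : IsInverseSemigroup mul) (He : IsIdentity mul e) (Hc : Countable S)
  (Ha : IsRepresentation mul e alpha) :
  (DomainMeasurable alpha (fun _ : X => True) <->
     ~ Paradoxical alpha (fun _ : X => True)) /\
  (~ Paradoxical alpha (fun _ : X => True) <->
     DomainFolner alpha (fun _ : X => True)).
Proof.
  destruct Hc as [f Hf].
  assert (NPF : ~ Paradoxical alpha (fun _ => True) -> DomainFolner alpha (fun _ => True)).
  { intros Hnp. apply NNPP. intros Hnf. apply Hnp.
    destruct (not_folner_exp alpha f Hf Hnf) as [N HN].
    apply (par_of_exp mul e alpha HS Ha (Wm mul e f N (Datatypes.S N))).
    apply (Hexp_final mul e alpha Ha f N HN). }
  split; split.
  - apply meas_not_par.
  - intros Hnp. apply (folner_meas mul e alpha HS Ha). auto.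
  - auto.
  - intros Hf'. apply meas_not_par. apply (folner_meas mul e alpha HS Ha). auto.
Qed.
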